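(* Consider the Geo/Geo/1/K queue described in the context and let the performance be the blocking indicator $Z_n=\mathbf 1\{X_n=K\}$ (an arrival in slot $n$ is blocked iff the queue is full). For an observed queue size $x\in\{0,\dots,K\}$ and lead time $L\ge0$, $$D_n(L)=\big|P^L(x,K)-\pi(K)\big|=\Big|\frac{2}{K+1}\beta^{\frac{K-x}{2}}\sum_{k=1}^K\frac{\gamma_k^L}{1-2\sqrt\beta\cos\frac{k\pi}{K+1}+\beta}\Big[\sin\tfrac{xk\pi}{K+1}-\sqrt\beta\sin\tfrac{(x+1)k\pi}{K+1}\Big]\sin\tfrac{Kk\pi}{K+1}\Big|,$$ where $\gamma_k=\alpha\mu+\bar\alpha\bar\mu+2\sqrt{\alpha\mu\bar\alpha\bar\mu}\cos\frac{k\pi}{K+1}$ and $\beta=\frac{\alpha\bar\mu}{\mu\bar\alpha}$.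
   Context: Geo/Geo/1/K queue: parameters $\alpha,\mu\in(0,1)$, $\bar\alpha=1-\alpha$, $\bar\mu=1-\mu$, buffer size $K\ge1$, with $\beta=\alpha\bar\mu/(\mu\bar\alpha)\ne1$. The queue size $(X_n)$ is a Markov chain on $\{0,\dots,K\}$ with $P(i,i+1)=\alpha\bar\mu$ for $0\le i\le K-1$; $P(i,i-1)=\mu\bar\alpha$ for $1\le i\le K$; $P(0,0)=1-\alpha\bar\mu$; $P(i,i)=\alpha\mu+\bar\alpha\bar\mu$ for $1\le i\le K-1$; $P(K,K)=1-\mu\bar\alpha$; all other entries $0$; $P^L$ is its $L$-th power. Its stationary distribution is $\pi(y)=\frac{1-\beta}{1-\beta^{K+1}}\beta^y$, and the chain is started in $\pi$. $\|p-q\|_{TV}=\frac12\sum_z|p(z)-q(z)|$; predictability $D_n(L)=\|\Pr(Z_{n+L}\in\cdot\mid X_n=x)-\Pr(Z_{n+L}\in\cdot)\|_{TV}$. *)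

(* Defs.v *)
From mathcomp Require Import all_boot all_order all_algebra.
From mathcomp Require Import reals trigo exp.
Unset Printing Implicit Defensive.
Import Order.TTheory GRing.Theory Num.Theory.
Local Open Scope ring_scope.

Section GeoGeo.
Variable R : realType.

Definition qbeta (a m : R) : R := (a * (1 - m)) / (m * (1 - a)).

Definition Pq (a m : R) (K : nat) : 'M[R]_(K.+1) :=
  \matrix_(i, j)
    if (j : nat) == i.+1 then a * (1 - m)
    else if (i : nat) == j.+1 then m * (1 - a)
    else if i == j then
      (if (i : nat) == 0%N then 1 - a * (1 - m)
       else if (i : nat) == K then 1 - m * (1 - a)
       else a * m + (1 - a) * (1 - m))
    else 0.

Definition piq (a m : R) (K : nat) : 'rV[R]_(K.+1) :=
  \row_(y < K.+1) ((1 - qbeta a m) / (1 - qbeta a m ^+ K.+1) * qbeta a m ^+ y).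

Definition tvd (T : finType) (p q : T -> R) : R :=
  2^-1 * \sum_(z : T) `|p z - q z|.

Definition Zlaw (K : nat) (v : 'rV[R]_(K.+1)) (b : bool) : R :=
  \sum_(y < K.+1 | (y == ord_max) == b) v 0 y.

(* predictability D_n(L): Pr(Z_{n+L} in . | X_n = x) = law of Z under P^L(x,.),
   Pr(Z_{n+L} in .) = law of Z under pi P^(n+L) (chain started in pi). *)
Definition Dpred (a m : R) (K n L : nat) (x : 'I_K.+1) : R :=
  @tvd bool (@Zlaw K (row x (Pq a m K ^+ L)))
      (@Zlaw K (piq a m K *m (Pq a m K ^+ (n + L)))).

Definition gammak (a m : R) (K k : nat) : R :=
  a * m + (1 - a) * (1 - m)
  + 2 * Num.sqrt (a * m * (1 - a) * (1 - m)) * cos (k%:R * pi / K.+1%:R).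

End GeoGeo.
Arguments qbeta {R}. Arguments Pq {R}. Arguments piq {R}. Arguments tvd {R T}. Arguments Zlaw {R K}. Arguments Dpred {R}. Arguments gammak {R}.

(* Main.v *)
Require Import Defs.
From mathcomp Require Import all_boot all_order all_algebra.
From mathcomp Require Import reals trigo exp.
From mathcomp.algebra_tactics Require Import ring lra.
From mathcomp.zify Require Import zify.
Import Order.TTheory GRing.Theory Num.Theory.
Local Open Scope ring_scope.



Section S.
Variable R : realType.

Lemma sin_natpi n : sin (n%:R * pi) = 0 :> R.
Proof.
elim: n => [|n IH]; first by rewrite mul0r sin0.
by rewrite -addn1 natrD mulrDl mul1r sinDpi IH oppr0.
Qed.

Lemma sum_ind (F : nat -> R) j n :
  \sum_(y < n) (((y:nat) == j)%:R * F y) = (j < n)%:R * F j.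
Proof.
elim: n => [|n IH]; first by rewrite big_ord0 ltn0 mul0r.
rewrite big_ord_recr /= IH.
have [->|ne] := eqVneq j n; first by rewrite ltnn ltnSn mul0r add0r !mul1r.
by rewrite mul0r addr0; congr (_%:R * _); move: ne => /eqP; lia.
Qed.

Lemma sum_indc (c : R) j n :
  \sum_(y < n) (((y:nat) == j)%:R * c) = (j < n)%:R * c.
Proof. exact: (sum_ind (fun _ => c)). Qed.

Lemma sum_indc_lt (c : R) j n : (j < n)%N ->
  \sum_(y < n) (((y:nat) == j)%:R * c) = c.
Proof. by move=> h; rewrite sum_indc h mul1r. Qed.

Definition dg (a m : R) K (i : nat) : R :=
  if i == 0%N then 1 - a * (1 - m) else if i == K then 1 - m * (1 - a)
  else a * m + (1 - a) * (1 - m).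

Lemma Pq_entry a m K (x y : 'I_K.+1) :
  Pq a m K x y = ((y:nat) == x.+1)%:R * (a * (1 - m)) + ((x:nat) == y.+1)%:R * (m * (1 - a))
     + ((y:nat) == x)%:R * dg a m K x.
Proof.
rewrite mxE /dg; case: x y => [x hx] [y hy] /=.
rewrite -val_eqE /=.
have [e|ne] := eqVneq y x.+1.
  subst y; rewrite ltn_eqF // gtn_eqF //=.
  set d := (if _ then _ else _); clearbody d; ring.
have [e|ne2] := eqVneq x y.+1.
  subst x; rewrite ltn_eqF //=.
  set d := (if _ then _ else _); clearbody d; ring.
have [e|ne3] := eqVneq y x.
  subst y; rewrite /=.
  set d := (if _ then _ else _); clearbody d; ring.
rewrite /=; set d := (if _ then _ else _); clearbody d; ring.
Qed.

Lemma Pq_mulf a m K (x : 'I_K.+1) (f : nat -> R) :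
 \sum_(y < K.+1) Pq a m K x y * f y =
   (if (x:nat) is x'.+1 then m*(1-a) * f x' else 0) + dg a m K x * f x
   + (if ((x:nat) < K)%N then a*(1-m) * f x.+1 else 0).
Proof.
under eq_bigr do rewrite Pq_entry !mulrDl.
rewrite !big_split /=.
have E1 : \sum_(y < K.+1) ((y:nat) == x.+1)%:R * (a*(1-m)) * f y
    = (x.+1 < K.+1)%:R * (a*(1-m)*f x.+1).
  rewrite -sum_indc; apply: eq_bigr => y _.
  by case: eqP => [->|_]; rewrite ?mul0r ?mul1r.
have E3 : \sum_(y < K.+1) ((y:nat) == x)%:R * dg a m K x * f y = dg a m K x * f x.
  rewrite -(@sum_indc_lt (dg a m K x * f x) x _ (ltn_ord x)); apply: eq_bigr => y _.
  by case: eqP => [->|_]; rewrite ?mul0r ?mul1r.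
have E2 : \sum_(y < K.+1) ((x:nat) == y.+1)%:R * (m*(1-a)) * f y
    = (if (x:nat) is x'.+1 then m*(1-a) * f x' else 0).
  clear E1 E3; case: x => [[|x] hx] /=.
    by apply: big1 => y _; rewrite mulr0n !mul0r.
  rewrite -(@sum_indc_lt (m * (1 - a) * f x) x K.+1); last by lia.
  apply: eq_bigr => y _.
  by rewrite eqSS eq_sym; case: eqP => [->|_]; rewrite ?mul0r ?mul1r.
rewrite E1 E2 E3 ltnS.
by case: (x < K)%N; rewrite /=; ring.
Qed.
End S.
Arguments sin_natpi {R}. Arguments sum_ind {R}. Arguments sum_indc {R}. Arguments dg {R}. Arguments Pq_entry {R}. Arguments Pq_mulf {R}.



Section T.
Variable R : realType.

Lemma tele (t w : R) n :
  2 * sin t * \sum_(x < n) cos (x%:R * (2 * t) + w)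
  = sin (n%:R * (2 * t) + w - t) - sin (w - t).
Proof.
elim: n => [|n IH]; first by rewrite big_ord0 mulr0 mul0r add0r subrr.
rewrite big_ord_recr /= mulrDr IH.
set A := n%:R * (2 * t) + w.
rewrite (_ : n.+1%:R * (2 * t) + w - t = A + t); last by rewrite /A -natr1; ring.
rewrite (sinD A t) (sinB A t); clearbody A; ring.
Qed.

Lemma csum (t w : R) K : sin t != 0 -> sin (K.+1%:R * t) = 0 ->
  \sum_(x < K.+1) cos (x%:R * (2 * t) + w) = 0.
Proof.
move=> hs h0.
have : 2 * sin t * \sum_(x < K.+1) cos (x%:R * (2 * t) + w) = 0.
  rewrite tele.
  rewrite (_ : K.+1%:R * (2 * t) + w - t = (K.+1%:R * t) *+ 2 + (w - t)); last by ring.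
  by rewrite (sinD ((K.+1%:R * t) *+ 2)) sin_mulr2n cos_mulr2n cos2sin2 h0; ring.
move/eqP; rewrite mulf_eq0 mulf_eq0 (negbTE hs) orbF pnatr_eq0 /=.
by move/eqP.
Qed.

Lemma usq_term (s a t : R) :
  (sin a - s * sin (a + t))^+2 = (1 + s^+2)/2 - s * cos t - cos (a *+ 2)/2
     + s * cos (a + (a + t)) - s^+2 * cos ((a + t) *+ 2) / 2.
Proof.
have -> : cos t = cos ((a + t) - a) by congr cos; ring.
rewrite (cosB (a+t) a) !cos_mulr2n (cosD a (a+t)) !cos2sin2.
by field.
Qed.

Lemma usq_sum (s t : R) K : sin t != 0 -> sin (K.+1%:R * t) = 0 ->
  \sum_(x < K.+1) (sin (x%:R * t) - s * sin (x.+1%:R * t))^+2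
  = K.+1%:R / 2 * (1 - 2 * s * cos t + s^+2).
Proof.
move=> hs h0.
have E : forall x : 'I_K.+1, (sin (x%:R * t) - s * sin (x.+1%:R * t))^+2
  = ((1 + s^+2)/2 - s * cos t) + (- 2^-1) * cos (x%:R * (2 * t) + 0)
     + s * cos (x%:R * (2 * t) + t) + (- (s^+2 / 2)) * cos (x%:R * (2 * t) + 2 * t).
  move=> x.
  rewrite (_ : x.+1%:R * t = x%:R * t + t); last by rewrite -natr1; ring.
  rewrite usq_term.
  rewrite (_ : (x%:R * t) *+ 2 = x%:R * (2 * t) + 0); last by ring.
  rewrite (_ : x%:R * t + (x%:R * t + t) = x%:R * (2 * t) + t); last by ring.
  rewrite (_ : (x%:R * t + t) *+ 2 = x%:R * (2 * t) + 2 * t); last by ring.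
  ring.
rewrite (eq_bigr _ (fun x _ => E x)) !big_split /= -!mulr_sumr !csum // sumr_const card_ord.
rewrite !sumr_const !card_ord -[(2^-1) *+ _]mulr_natr -[(- (s * cos t)) *+ _]mulr_natr.
set N : R := K.+1%:R; clearbody N; by field.
Qed.

End T.
Arguments usq_sum {R}.



Section E.
Variable R : realType.

Definition vf (s tt th : R) (y : nat) : R :=
  tt^+y * (sin (y%:R * th) - s * sin (y.+1%:R * th)).

Lemma interior (p q r sp sq s tt th : R) y :
  sp != 0 -> sq != 0 -> p = sp^+2 -> q = sq^+2 -> s = sp/sq -> tt = sq/sp ->
  q * vf s tt th y + r * vf s tt th y.+1 + p * vf s tt th y.+2
  = (r + 2 * (sp * sq) * cos th) * vf s tt th y.+1.
Proof.
move=> hp hq -> -> -> ->; rewrite /vf.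
set z := y.+1%:R * th.
rewrite (_ : y%:R * th = z - th); last by rewrite /z -natr1; ring.
rewrite (_ : y.+2%:R * th = z + th); last by rewrite /z -(@natr1 R y.+1); ring.
rewrite (_ : y.+3%:R * th = z + th + th); last by rewrite /z -(@natr1 R y.+2) -(@natr1 R y.+1); ring.
have h1 : sin (z - th) = 2 * cos th * sin z - sin (z + th).
  rewrite sinB sinD; ring.
have h2 : sin (z + th + th) = 2 * cos th * sin (z + th) - sin z.
  rewrite (_ : sin z = sin ((z + th) - th)); last by congr sin; ring.
  rewrite sinB sinD; ring.
rewrite h1 h2 !exprS.
field; apply/andP; split => //.
Qed.

Lemma eig (a m sp sq s tt th : R) K (x : 'I_K.+1) : (1 <= K)%N -> 0 < sp -> 0 < sq ->
  sp^+2 = a*(1-m) -> sq^+2 = m*(1-a) -> s = sp/sq -> tt = sq/sp ->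
  sin (K.+1%:R * th) = 0 ->
  \sum_(y < K.+1) Pq a m K x y * vf s tt th y
  = (a * m + (1-a)*(1-m) + 2 * (sp*sq) * cos th) * vf s tt th x.
Proof.
move=> hK sp0 sq0 hp hq hs ht h0.
have sp0' : sp != 0 by rewrite gt_eqF.
have sq0' : sq != 0 by rewrite gt_eqF.
rewrite Pq_mulf /dg.
case: x => [[|x] hx] /=.
  rewrite (_ : (0 < K)%N = true); last by lia.
  rewrite add0r /vf !expr0 !expr1 !mul0r sin0 !mul1r.
  rewrite (_ : 2%:R * th = th + th); last by rewrite -natr1; ring.
  rewrite sinD.
  rewrite (_ : 1 - a * (1 - m) = (a * m + (1 - a) * (1 - m)) + m * (1 - a)); last by ring.
  set r := a * m + (1 - a) * (1 - m); clearbody r.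
  rewrite -hp -hq hs ht.
  field; apply/andP; split => //.
have [eK|nK] := eqVneq x.+1 K; last first.
  have hxK : (x.+2 <= K)%N by move: nK hx => /eqP; lia.
  rewrite hxK.
  rewrite -(interior (a*(1-m)) (m*(1-a)) (a * m + (1 - a) * (1 - m)) sp sq s tt th x sp0' sq0' (esym hp) (esym hq) hs ht).
  ring.
rewrite eK ltnn addr0.
have := interior (a*(1-m)) (m*(1-a)) (a * m + (1 - a) * (1 - m)) sp sq s tt th x sp0' sq0' (esym hp) (esym hq) hs ht.
rewrite eK => <-.
suff E : vf s tt th K = vf s tt th K.+1.
  rewrite -E; ring.
rewrite /vf exprSr.
set w := K.+1%:R * th.
rewrite (_ : K%:R * th = w - th); last by rewrite /w -natr1; ring.
rewrite (_ : K.+2%:R * th = w + th); last by rewrite /w -(@natr1 R K.+1); ring.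
rewrite sinB sinD h0 hs ht.
field; apply/andP; split => //.
Qed.

End E.
Arguments vf {R}. Arguments eig {R}.



Section Main.
Variables (R : realType) (a m : R) (K : nat).
Hypotheses (ha : 0 < a < 1) (hm : 0 < m < 1) (hb : qbeta a m != 1) (hK : (1 <= K)%N).

Let p := a * (1 - m).
Let q := m * (1 - a).
Let sp := Num.sqrt p.
Let sq := Num.sqrt q.
Let s := sp / sq.
Let tt := sq / sp.
Let bt := qbeta a m.
Let c0 := (1 - bt) / (1 - bt ^+ K.+1).
Let P := Pq a m K.
Let pv := piq a m K.

Lemma a0 : a != 0. Proof. by case/andP: ha => h _; rewrite gt_eqF. Qed.
Lemma m0 : m != 0. Proof. by case/andP: hm => h _; rewrite gt_eqF. Qed.
Lemma a1 : 1 - a != 0. Proof. by case/andP: ha => _ h; rewrite subr_eq0 eq_sym lt_eqF. Qed.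
Lemma m1 : 1 - m != 0. Proof. by case/andP: hm => _ h; rewrite subr_eq0 eq_sym lt_eqF. Qed.

Lemma p_gt0 : 0 < p.
Proof. rewrite /p; case/andP: ha => ? ?; case/andP: hm => ? ?; apply: mulr_gt0 => //; lra. Qed.
Lemma q_gt0 : 0 < q.
Proof. rewrite /q; case/andP: ha => ? ?; case/andP: hm => ? ?; apply: mulr_gt0 => //; lra. Qed.
Lemma sp_gt0 : 0 < sp. Proof. by rewrite sqrtr_gt0 p_gt0. Qed.
Lemma sq_gt0 : 0 < sq. Proof. by rewrite sqrtr_gt0 q_gt0. Qed.
Lemma sp2 : sp ^+ 2 = p. Proof. by rewrite sqr_sqrtr // ltW // p_gt0. Qed.
Lemma sq2 : sq ^+ 2 = q. Proof. by rewrite sqr_sqrtr // ltW // q_gt0. Qed.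
Lemma sp0 : sp != 0. Proof. by rewrite gt_eqF // sp_gt0. Qed.
Lemma sq0 : sq != 0. Proof. by rewrite gt_eqF // sq_gt0. Qed.
Lemma s_tt : s * tt = 1.
Proof. rewrite /s /tt; have := sp0; have := sq0; move=> h1 h2; by field; apply/andP. Qed.
Lemma s_gt0 : 0 < s. Proof. by rewrite divr_gt0 // ?sp_gt0 ?sq_gt0. Qed.
Lemma bt_s : bt = s ^+ 2.
Proof.
rewrite /bt /qbeta /s -[a * (1 - m)]/p -[m * (1 - a)]/q -sp2 -sq2.
have := sq0; move=> h; by field.
Qed.
Lemma bt_gt0 : 0 < bt. Proof. by rewrite bt_s exprn_gt0 // s_gt0. Qed.
Lemma sqrt_bt : Num.sqrt bt = s.
Proof. by rewrite bt_s sqrtr_sqr gtr0_norm // s_gt0. Qed.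
Lemma btK_neq1 : 1 - bt ^+ K.+1 != 0.
Proof. by rewrite subr_eq0 eq_sym pexpr_eq1 // ?ltW ?bt_gt0. Qed.
Lemma c0_neq0 : c0 != 0.
Proof.
rewrite /c0 mulf_eq0 invr_eq0 negb_or btK_neq1 andbT subr_eq0 eq_sym; exact: hb.
Qed.
Lemma pvE (y : 'I_K.+1) : pv 0 y = c0 * bt ^+ y.
Proof. by rewrite /pv /piq mxE. Qed.
Lemma sum_pv : \sum_(y < K.+1) pv 0 y = 1.
Proof.
under eq_bigr do rewrite pvE.
rewrite -mulr_sumr.
have := subrXX 1 bt K.+1; rewrite expr1n.
under eq_bigr do rewrite expr1n mul1r.
move=> h.
rewrite (eq_bigr (fun i : 'I_K.+1 => bt ^+ i)) //.
rewrite /c0.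
have hh : (1 - bt) * \sum_(i < K.+1) bt ^+ i = 1 - bt ^+ K.+1 by rewrite h.
rewrite -mulrA mulrC -mulrA [_ * (1 - bt)]mulrC hh mulrC divff //; exact: btK_neq1.
Qed.


Definition th (k : nat) : R := k%:R * pi / K.+1%:R.
Definition gk (k : nat) : R := a * m + (1 - a) * (1 - m) + 2 * (sp * sq) * cos (th k).
Definition den (k : nat) : R := 1 - 2 * s * cos (th k) + s ^+ 2.

Lemma N_gt0 : 0 < K.+1%:R :> R. Proof. by rewrite ltr0n. Qed.
Lemma N1_neq0 : 1 + K%:R != 0 :> R. Proof. by rewrite nat1r pnatr_eq0. Qed.
Lemma N_neq0 : K.+1%:R != 0 :> R. Proof. by rewrite pnatr_eq0. Qed.

Lemma th_bounds k : (0 < k)%N -> (k < K.+1)%N -> 0 < th k < pi.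
Proof.
move=> h1 h2; rewrite /th.
have hk : 0 < k%:R :> R by rewrite ltr0n.
have hkN : k%:R < K.+1%:R :> R by rewrite ltr_nat.
have hpi := pi_gt0 R.
have hN := N_gt0.
apply/andP; split; first by rewrite divr_gt0 ?mulr_gt0.
rewrite ltr_pdivrMr //; nra.
Qed.

Lemma sin_thK k : sin (K.+1%:R * th k) = 0.
Proof.
rewrite /th (_ : K.+1%:R * (k%:R * pi / K.+1%:R) = k%:R * pi) ?sin_natpi //.
by field; rewrite N1_neq0.
Qed.

Lemma sin_th_gt0 k : (0 < k)%N -> (k < K.+1)%N -> 0 < sin (th k).
Proof. by move=> h1 h2; apply: sin_gt0_pi; apply: th_bounds. Qed.

Lemma sin_th0 k : (0 < k)%N -> (k < K.+1)%N -> sin (th k) != 0.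
Proof. by move=> h1 h2; rewrite gt_eqF // sin_th_gt0. Qed.

Lemma th_in k : (0 < k)%N -> (k < K.+1)%N -> th k \in `[0, pi].
Proof.
move=> h1 h2; have /andP [u v] := th_bounds _ h1 h2.
by rewrite in_itv /= (ltW u) (ltW v).
Qed.

Lemma cos_th_lt1 k : (0 < k)%N -> (k < K.+1)%N -> cos (th k) < 1.
Proof.
move=> h1 h2; rewrite -cos0 ltr_cos ?th_in //.
  by have /andP [] := th_bounds _ h1 h2.
by rewrite in_itv /= lexx pi_ge0.
Qed.

Lemma cos_th_inj j k : (0 < j)%N -> (j < K.+1)%N -> (0 < k)%N -> (k < K.+1)%N ->
  cos (th j) = cos (th k) -> j = k.
Proof.
move=> h1 h2 h3 h4 /cos_inj E.
have {E} := E (th_in _ h1 h2) (th_in _ h3 h4).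
rewrite /th => /(congr1 (fun z => z * K.+1%:R / pi)).
have := N_gt0; rewrite lt0r => /andP [hN _].
have := pi_gt0 R; rewrite lt0r => /andP [hpi _].
rewrite !divfK // !mulfK //.
by move/eqP; rewrite eqr_nat => /eqP.
Qed.

Lemma den_gt0 k : (0 < k)%N -> (k < K.+1)%N -> 0 < den k.
Proof.
move=> h1 h2; rewrite /den.
have hs := sin_th_gt0 _ h1 h2.
have hc := cos2Dsin2 (th k).
have h3 : 0 <= (s - cos (th k))^+2 by apply: sqr_ge0.
have h4 : 0 < sin (th k) ^+ 2 by apply: exprn_gt0.
nra.
Qed.

Lemma gk_neq1 k : (0 < k)%N -> (k < K.+1)%N -> gk k != 1.
Proof.
move=> h1 h2; rewrite /gk lt_eqF //.
have hc := cos_th_lt1 _ h1 h2.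
have hp := sp_gt0; have hq := sq_gt0.
have e1 : sp ^+ 2 = a * (1 - m) := sp2.
have e2 : sq ^+ 2 = m * (1 - a) := sq2.
have h3 : 0 <= (sp - sq)^+2 by apply: sqr_ge0.
have h5 : 0 < sp * sq by apply: mulr_gt0.
nra.
Qed.


Definition V : 'M[R]_(K.+1) :=
  \matrix_(y, k) (if (k:nat) == 0%N then 1 else vf s tt (th k) y).
Definition gv : 'rV[R]_(K.+1) := \row_k (if (k:nat) == 0%N then 1 else gk k).

Lemma rowsum (x : 'I_K.+1) : \sum_(y < K.+1) P x y = 1.
Proof.
have := Pq_mulf a m K x (fun _ => 1).
under eq_bigr do rewrite mulr1.
rewrite /P => ->; rewrite /dg.
case: x => [[|x] hx] /=.
  by rewrite (_ : (0 < K)%N = true) //; ring.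
have [e|ne] := eqVneq x.+1 K.
  by rewrite e ltnn; ring.
rewrite (_ : (x.+1 < K)%N = true); last by move: ne hx => /eqP; lia.
ring.
Qed.

Lemma PV : P *m V = V *m diag_mx gv.
Proof.
apply/matrixP => x k.
rewrite [LHS]mxE mul_mx_diag [RHS]mxE [V x k]mxE [gv 0 k]mxE.
rewrite (eq_bigr (fun y => P x y * (if (k:nat) == 0%N then 1 else vf s tt (th k) y))); last first.
  by move=> y _; rewrite [V y k]mxE.
have [hk0|hk0] := eqVneq (k:nat) 0%N.
  by rewrite [RHS]mulr1 -[RHS](rowsum x); apply: eq_bigr => y _; rewrite mulr1.
have hk1 : (0 < k)%N by rewrite lt0n.
rewrite /P (eig a m sp sq s tt (th k) K x hK sp_gt0 sq_gt0 sp2 sq2 erefl erefl (sin_thK k)) mulrC.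
by rewrite /gk.
Qed.

Lemma db (i j : 'I_K.+1) : pv 0 i * P i j = pv 0 j * P j i.
Proof.
rewrite !pvE /P !Pq_entry.
case: i j => [i hi] [j hj] /=.
have [e|ne] := eqVneq j i.+1.
  subst j; rewrite ltn_eqF // gtn_eqF // ltn_eqF //=.
  have hq : m * (1 - a) != 0 by rewrite gt_eqF //; exact: q_gt0.
  by rewrite exprSr /bt /qbeta; field; rewrite ?a0 ?m0 ?a1 ?m1.
have [e|ne2] := eqVneq i j.+1.
  subst i; rewrite ltn_eqF // gtn_eqF //=.
  have hq : m * (1 - a) != 0 by rewrite gt_eqF //; exact: q_gt0.
  by rewrite exprSr /bt /qbeta; field; rewrite ?a0 ?m0 ?a1 ?m1.
have [e|ne3] := eqVneq i j.
  by subst j.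
rewrite /=.
ring.
Qed.


Definition W : 'M[R]_(K.+1) := diag_mx pv.
Definition G : 'M[R]_(K.+1) := V^T *m W *m V.

Lemma WP_sym : (W *m P)^T = W *m P.
Proof.
apply/matrixP => i j; rewrite [LHS]mxE /W !mul_diag_mx [LHS]mxE [RHS]mxE; exact: db.
Qed.

Lemma G_comm : G *m diag_mx gv = diag_mx gv *m G.
Proof.
have L : G *m diag_mx gv = V^T *m (W *m P) *m V.
  by rewrite /G -!mulmxA PV.
have Rr : diag_mx gv *m G = V^T *m (W *m P) *m V.
  rewrite -{1}(tr_diag_mx gv) /G !mulmxA -trmx_mul -PV trmx_mul.
  have E : P^T *m W = W *m P by rewrite -WP_sym trmx_mul /W tr_diag_mx.
  by rewrite -(mulmxA (V^T) (P^T)) E !mulmxA.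
by rewrite L Rr.
Qed.

Lemma gv_inj (j k : 'I_K.+1) : gv 0 j = gv 0 k -> j = k.
Proof.
rewrite !mxE.
have hpq : 0 < sp * sq by apply: mulr_gt0; [exact: sp_gt0 | exact: sq_gt0].
have [j0|j0] := eqVneq (j:nat) 0%N; have [k0|k0] := eqVneq (k:nat) 0%N.
- by move=> _; apply: val_inj; rewrite /= j0 k0.
- by move=> E; exfalso; move: (gk_neq1 k (neq0_lt0n (negbTE k0)) (ltn_ord k)); rewrite -E eqxx.
- by move=> E; exfalso; move: (gk_neq1 j (neq0_lt0n (negbTE j0)) (ltn_ord j)); rewrite E eqxx.
move=> E; apply: val_inj; apply: (cos_th_inj _ _ (neq0_lt0n (negbTE j0)) (ltn_ord j) (neq0_lt0n (negbTE k0)) (ltn_ord k)).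
move: E; rewrite /gk => /addrI /mulfI; apply.
by rewrite mulf_neq0 // gt_eqF.
Qed.

Lemma G_offdiag (j k : 'I_K.+1) : j != k -> G j k = 0.
Proof.
move=> ne.
have := congr1 (fun M : 'M[R]_(K.+1) => M j k) G_comm.
rewrite /= mul_mx_diag mul_diag_mx [LHS]mxE [RHS]mxE => E.
have H : (gv 0 k - gv 0 j) * G j k = 0 by rewrite mulrBl [gv 0 k * _]mulrC E subrr.
move/eqP: H; rewrite mulf_eq0 subr_eq0 => /orP [/eqP E2|/eqP //].
exfalso; move/eqP: ne; apply; apply: gv_inj; by rewrite E2.
Qed.

Lemma GE (j k : 'I_K.+1) : G j k = \sum_(y < K.+1) V y j * pv 0 y * V y k.
Proof.
rewrite /G mxE; apply: eq_bigr => y _.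
by rewrite /W mul_mx_diag !mxE.
Qed.


Lemma G00 : G ord0 ord0 = 1.
Proof.
rewrite GE -sum_pv; apply: eq_bigr => y _.
by rewrite [V y ord0]mxE /= mul1r mulr1.
Qed.

Lemma Gkk (k : 'I_K.+1) : (k:nat) != 0%N -> G k k = c0 * (K.+1%:R / 2 * den k).
Proof.
move=> hk.
have hk1 : (0 < k)%N by rewrite lt0n.
rewrite GE (eq_bigr (fun y : 'I_K.+1 =>
   c0 * (sin (y%:R * th k) - s * sin (y.+1%:R * th k))^+2)).
  by rewrite -mulr_sumr usq_sum ?sin_th0 ?sin_thK.
move=> y _; rewrite [V y k]mxE (negbTE hk) pvE /vf bt_s.
set U := sin _ - _.
have e : tt ^+ y * (s ^+ 2) ^+ y * tt ^+ y = 1.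
  rewrite -!exprMn (_ : tt * s ^+ 2 * tt = (s * tt) ^+ 2); last by ring.
  by rewrite s_tt !expr1n.
rewrite (_ : tt ^+ y * U * (c0 * (s ^+ 2) ^+ y) * (tt ^+ y * U)
   = c0 * U ^+ 2 * (tt ^+ y * (s ^+ 2) ^+ y * tt ^+ y)); last by ring.
by rewrite e mulr1.
Qed.

Lemma Gkk_neq0 (k : 'I_K.+1) : G k k != 0.
Proof.
have [hk|hk] := eqVneq (k:nat) 0%N.
  have -> : k = ord0 by apply: val_inj.
  by rewrite G00 oner_neq0.
have hk1 : (0 < k)%N by rewrite lt0n.
rewrite Gkk // mulf_neq0 ?c0_neq0 // mulf_neq0 ?mulf_neq0 ?N_neq0 //.
  by rewrite invr_eq0 pnatr_eq0.
by rewrite gt_eqF // den_gt0.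
Qed.

Definition w : 'cV[R]_(K.+1) := \col_y (((y : 'I_K.+1) == ord_max)%:R - pv 0 ord_max).
Definition cc : 'cV[R]_(K.+1) :=
  \col_k (if (k:nat) == 0%N then 0 else pv 0 ord_max * V ord_max k / G k k).

Lemma Aw : V^T *m W *m w = G *m cc.
Proof.
apply/matrixP => k i.
have L : (V^T *m W *m w) k i = V ord_max k * pv 0 ord_max - pv 0 ord_max * G ord0 k.
  rewrite mxE (eq_bigr (fun y : 'I_K.+1 => (y == ord_max)%:R * (V y k * pv 0 y)
     - pv 0 ord_max * (V y ord0 * pv 0 y * V y k))); last first.
    move=> y _; rewrite /W mul_mx_diag [(\matrix_(_, _) _) _ _]mxE [w y i]mxE.
    rewrite [V y ord0]mxE [(V^T) k y]mxE /=; ring.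
  rewrite sumrB -mulr_sumr -GE (bigD1 ord_max) //= eqxx mul1r big1 ?addr0 //.
  by move=> y /negbTE ->; rewrite mul0r.
rewrite L [RHS]mxE (bigD1 k) //= big1 ?addr0; last first.
  by move=> j hj; rewrite G_offdiag ?mul0r // eq_sym.
rewrite [cc k i]mxE.
have [hk|hk] := eqVneq (k:nat) 0%N.
  have -> : k = ord0 by apply: val_inj.
  by rewrite G00 [V ord_max ord0]mxE /= mulr0 mulr1 mul1r subrr.
rewrite G_offdiag; last by apply/eqP => e; move: hk; rewrite -e.
rewrite mulr0 subr0.
have := Gkk_neq0 k => h.
by field.
Qed.


Lemma w_Vcc : w = V *m cc.
Proof.
set A := V^T *m W.
set B := V *m diag_mx (\row_k (G k k)^-1).
have AB : A *m B = 1%:M.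
  rewrite /B mulmxA (_ : A *m V = G) // mul_mx_diag.
  apply/matrixP => i j; rewrite [LHS]mxE [RHS]mxE [X in G i j * X]mxE.
  have [e|ne] := eqVneq i j.
    by subst j; rewrite divff ?Gkk_neq0.
  by rewrite G_offdiag // mul0r.
have BA := mulmx1C AB.
have E1 : A *m w = A *m (V *m cc) by rewrite /A Aw mulmxA.
by rewrite -[w]mul1mx -BA -mulmxA E1 mulmxA BA mul1mx.
Qed.

Definition gL (L : nat) : 'rV[R]_(K.+1) := \row_k (gv 0 k ^+ L).

Lemma PLV L : P ^+ L *m V = V *m diag_mx (gL L).
Proof.
elim: L => [|L IH].
  rewrite expr0 mul1mx mul_mx_diag; apply/matrixP => i j.
  by rewrite [RHS]mxE [gL 0 0 j]mxE expr0 mulr1.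
rewrite exprS -mulmxE -mulmxA IH mulmxA PV -mulmxA mulmx_diag.
congr (_ *m diag_mx _); apply/matrixP => i j; rewrite !mxE.
by rewrite exprS.
Qed.

Lemma PL_rowsum L (x : 'I_K.+1) : \sum_(y < K.+1) (P ^+ L) x y = 1.
Proof.
have := congr1 (fun M : 'M[R]_(K.+1) => M x ord0) (PLV L).
rewrite /= mul_mx_diag [LHS]mxE [RHS]mxE [gL L 0 ord0]mxE [V x ord0]mxE [gv 0 ord0]mxE /=.
rewrite expr1n mulr1 => <-; apply: eq_bigr => y _.
by rewrite [V y ord0]mxE mulr1.
Qed.

Lemma key L (x : 'I_K.+1) :
  (P ^+ L) x ord_max - pv 0 ord_max
  = \sum_(k < K.+1) V x k * gv 0 k ^+ L * cc k 0.
Proof.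
have := congr1 (fun M : 'cV[R]_(K.+1) => (P ^+ L *m M) x 0) w_Vcc.
rewrite /= mulmxA PLV [LHS]mxE [RHS]mxE.
move=> E.
transitivity (\sum_(j < K.+1) (P ^+ L) x j * w j 0).
  rewrite (eq_bigr (fun j => (j == ord_max)%:R * (P ^+ L) x j - pv 0 ord_max * (P ^+ L) x j)); last first.
    by move=> j _; rewrite [w j 0]mxE; ring.
  rewrite sumrB -mulr_sumr PL_rowsum mulr1 (bigD1 ord_max) //= eqxx mul1r big1 ?addr0 //.
  by move=> y /negbTE ->; rewrite mul0r.
rewrite E; apply: eq_bigr => k _.
by rewrite mul_mx_diag [(\matrix_(_, _) _) _ _]mxE [gL L 0 k]mxE.
Qed.


Lemma gammak_gk k : gammak a m K k = gk k.
Proof.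
rewrite /gammak /gk /th (_ : a * m * (1 - a) * (1 - m) = p * q); last by rewrite /p /q; ring.
by rewrite sqrtrM // ltW // p_gt0.
Qed.

Lemma tt_inv : tt = s^-1.
Proof.
have s0 : s != 0 by rewrite gt_eqF // s_gt0.
by rewrite -[tt]mul1r -(mulVf s0) -mulrA s_tt mulr1.
Qed.

Definition Fk (x : nat) (L k : nat) : R :=
  gammak a m K k ^+ L
   / (1 - 2 * Num.sqrt (qbeta a m) * cos (k%:R * pi / K.+1%:R) + qbeta a m)
   * (sin (x%:R * k%:R * pi / K.+1%:R)
      - Num.sqrt (qbeta a m) * sin ((x.+1)%:R * k%:R * pi / K.+1%:R))
   * sin (K%:R * k%:R * pi / K.+1%:R).

Lemma term (x : 'I_K.+1) L (k : 'I_K.+1) : (k:nat) != 0%N ->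
  V x k * gv 0 k ^+ L * cc k 0 = 2 / K.+1%:R * s ^+ (K - x) * Fk x L k.
Proof.
move=> hk.
have hk1 : (0 < k)%N by rewrite lt0n.
rewrite [V x k]mxE [gv 0 k]mxE [cc k 0]mxE (negbTE hk) [V ord_max k]mxE (negbTE hk).
rewrite Gkk // pvE /Fk gammak_gk -/bt sqrt_bt bt_s.
have E1 : forall y : nat, y%:R * k%:R * pi / K.+1%:R = y%:R * th k.
  by move=> y; rewrite /th !mulrA.
rewrite !E1 /th -/(th k).
rewrite /vf /= sin_thK mulr0 subr0.
have s0 : s != 0 by rewrite gt_eqF // s_gt0.
have d0 : den k != 0 by rewrite gt_eqF // den_gt0.
have hx : (x <= K)%N by rewrite -ltnS.
rewrite tt_inv !exprVn -/(den k).
have eK : s ^+ K = s ^+ (K - x) * s ^+ x by rewrite -exprD subnK.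
have e2K : (s ^+ 2) ^+ K = s ^+ K * s ^+ K by rewrite -exprM mul2n -addnn exprD.
rewrite e2K eK.
have A0 : s ^+ (K - x) != 0 by rewrite expf_neq0.
have B0 : s ^+ x != 0 by rewrite expf_neq0.
have c00 := c0_neq0.
move: (s ^+ (K - x)) (s ^+ x) A0 B0 => A B A0 B0.
by field; rewrite ?N1_neq0 ?A0 ?B0 ?c00 ?d0.
Qed.



Lemma powR_e (x : 'I_K.+1) : qbeta a m `^ ((K%:R - (x:nat)%:R) / 2) = s ^+ (K - x).
Proof.
have hx : (x <= K)%N by rewrite -ltnS.
rewrite -natrB // mulrC powRrM powR12_sqrt ?ltW ?bt_gt0 //.
rewrite powR_mulrn ?sqrtr_ge0 //.
by rewrite -/bt sqrt_bt.
Qed.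

Lemma formula L (x : 'I_K.+1) :
  (P ^+ L) x ord_max - pv 0 ord_max
  = 2 / K.+1%:R * (qbeta a m `^ ((K%:R - (x:nat)%:R) / 2)) * \sum_(1 <= k < K.+1) Fk x L k.
Proof.
rewrite key big_ord_recl [cc ord0 0]mxE /= mulr0 add0r powR_e.
rewrite big_add1 /= big_mkord mulr_sumr; apply: eq_bigr => i _.
by rewrite term ?lift0.
Qed.

Lemma pvP : pv *m P = pv.
Proof.
apply/matrixP => i j; rewrite [LHS]mxE (ord1 i).
rewrite (eq_bigr (fun y => pv 0 j * P j y)); last by move=> y _; exact: db.
by rewrite -mulr_sumr rowsum mulr1.
Qed.

Lemma pvPN N : pv *m P ^+ N = pv.
Proof.
elim: N => [|N IH]; first by rewrite expr0 mulmx1.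
by rewrite exprSr -mulmxE mulmxA IH pvP.
Qed.

End Main.

Section Z.
Variable R : realType.

Lemma Zlaw_true K (v : 'rV[R]_(K.+1)) : Zlaw v true = v 0 ord_max.
Proof.
rewrite /Zlaw (eq_bigl (fun y => y == ord_max)) ?big_pred1_eq // => y.
exact: eqb_id.
Qed.

Lemma Zlaw_false K (v : 'rV[R]_(K.+1)) :
  Zlaw v false = \sum_(y < K.+1) v 0 y - v 0 ord_max.
Proof.
rewrite /Zlaw (eq_bigl (fun y => y != ord_max)); last by move=> y; exact: eqbF_neg.
by rewrite [X in _ = X - _](bigD1 ord_max) //= addrC addrK.
Qed.

Lemma tvd_bool (f g : bool -> R) :
  tvd f g = 2^-1 * (`|f true - g true| + `|f false - g false|).
Proof. by rewrite /tvd big_bool. Qed.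

End Z.

Section Fin.
Variables (R : realType) (a m : R) (K : nat).
Hypotheses (ha : 0 < a < 1) (hm : 0 < m < 1) (hb : qbeta a m != 1) (hK : (1 <= K)%N).

Lemma Dpred_eq n L (x : 'I_K.+1) :
  Dpred a m K n L x = `|(Pq a m K ^+ L) x ord_max - piq a m K 0 ord_max|.
Proof.
have hr : forall (M : 'M[R]_(K.+1)) y, (row x M) 0 y = M x y by move=> M y; rewrite mxE.
rewrite /Dpred tvd_bool !Zlaw_true !Zlaw_false !hr.
rewrite (eq_bigr (fun y => (Pq a m K ^+ L) x y)); last by move=> y _; rewrite hr.
rewrite (PL_rowsum _ _ _ _ ha hm hb hK) (pvPN _ _ _ _ ha hm hb hK) (sum_pv _ _ _ _ ha hm hb).
set A := (Pq a m K ^+ L) x ord_max.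
set B := piq a m K 0 ord_max.
rewrite (_ : 1 - A - (1 - B) = - (A - B)); last by ring.
rewrite normrN.
by field.
Qed.

End Fin.

Theorem proposition2 (R : realType) (a m : R) (K : nat) (x : 'I_K.+1) (n L : nat) :
  0 < a < 1 -> 0 < m < 1 -> qbeta a m != 1 -> (1 <= K)%N ->
  Dpred a m K n L x = `|(Pq a m K ^+ L)%R x ord_max - piq a m K 0 ord_max| /\
  Dpred a m K n L x =
    `| 2 / K.+1%:R * (qbeta a m `^ ((K%:R - (x : nat)%:R) / 2)) *
       \sum_(1 <= k < K.+1)
         (gammak a m K k ^+ L
          / (1 - 2 * Num.sqrt (qbeta a m) * cos (k%:R * pi / K.+1%:R) + qbeta a m)
          * (sin ((x : nat)%:R * k%:R * pi / K.+1%:R)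
             - Num.sqrt (qbeta a m) * sin (((x : nat).+1)%:R * k%:R * pi / K.+1%:R))
          * sin (K%:R * k%:R * pi / K.+1%:R)) |.
Proof.
move=> ha hm hb hK.
have E1 := Dpred_eq _ _ _ _ ha hm hb hK n L x.
split; first exact: E1.
by rewrite E1 (formula _ _ _ _ ha hm hb hK L x) /Fk.
Qed.
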